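(* Every standard finitary set functor $H\colon\mathbf{Set}\to\mathbf{Set}$ has a reduced presentation.
   Context: A set functor $H$ is finitary if for every set $X$, $HX=\bigcup HY$ over finite subsets $Y\subseteq X$ (identifying $HY$ with its image). $H$ is standard if it preserves inclusions ($X\subseteq Y$ implies $HX\subseteq HY$ with $H$ of the inclusion map being the inclusion map) and preserves finite intersections. For a finitary signature $\Sigma=(\Sigma_n)_{n<\omega}$ the polynomial functor is $H_\Sigma X=\coprod_{n<\omega}\Sigma_n\times X^n$; its elements are written $\sigma(x_1,\dots,x_n)$. A presentation of $H$ is a finitary signature $\Sigma$ with a natural transformation $\varepsilon\colon H_\Sigma\to H$ all of whose components are surjective. An $\varepsilon$-equation is an expression $\sigma(x_1,\dots,x_n)=\tau(z_1,\dots,z_m)$ with $\sigma\in\Sigma_n$, $\tau\in\Sigma_m$ and variables $x_i,z_j$ (not necessarily distinct) such that $\varepsilon_X$ maps both sides to the same element, where $X=\{x_1,\dots,x_n,z_1,\dots,z_m\}$. A presentation is reduced if for every $\varepsilon$-equation $\sigma(x_1,\dots,x_n)=\tau(z_1,\dots,z_m)$: (1) if $x_1,\dots,x_n$ are pairwise distinct, then each $x_i$ lies in $\{z_1,\dots,z_m\}$; and (2) if moreover $z_1,\dots,z_m$ are also pairwise distinct, then $\sigma=\tau$. *)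

(* Defs.v *)
From Stdlib Require Import List.
Set Implicit Arguments.
Unset Strict Implicit.

(* Sets are modelled by types; a set functor is a functor Type -> Type. *)
Record SetFunctor := {
  Fobj :> Type -> Type;
  Fmap : forall (X Y : Type), (X -> Y) -> Fobj X -> Fobj Y;
  Fmap_id : forall (X : Type) (a : Fobj X), Fmap (fun x : X => x) a = a;
  Fmap_comp : forall (X Y Z : Type) (f : X -> Y) (g : Y -> Z) (a : Fobj X),
      Fmap (fun x => g (f x)) a = Fmap g (Fmap f a)
}.

Definition incl_map (H : SetFunctor) (X : Type) (P : X -> Prop)
  : H {x : X | P x} -> H X := @Fmap H _ _ (@proj1_sig X P).

Definition in_sub (H : SetFunctor) (X : Type) (P : X -> Prop) (a : H X) : Prop :=
  exists b : H {x : X | P x}, @incl_map H X P b = a.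

Definition finitary (H : SetFunctor) : Prop :=
  forall (X : Type) (a : H X), exists l : list X, @in_sub H X (fun x => In x l) a.

(* Standard: preserves inclusions (H maps inclusions to injective maps,
   identified with inclusions) and preserves finite intersections. *)
Definition standard (H : SetFunctor) : Prop :=
  (forall (X : Type) (P : X -> Prop) (b1 b2 : H {x : X | P x}),
      @incl_map H X P b1 = @incl_map H X P b2 -> b1 = b2) /\
  (forall (X : Type) (P Q : X -> Prop) (a : H X),
      @in_sub H X P a -> @in_sub H X Q a -> @in_sub H X (fun x => P x /\ Q x) a).

(* Finitary signatures and polynomial functors H_Sigma X = coprod_n Sigma_n x X^n. *)
Definition Signature := nat -> Type.

Definition PolyObj (S : Signature) (X : Type) : Type :=
  { n : nat & (S n * (forall i : nat, i < n -> X))%type }.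

Definition PolyMap (S : Signature) (X Y : Type) (f : X -> Y) (t : PolyObj S X)
  : PolyObj S Y :=
  match t with
  | existT _ n (s, xs) => existT _ n (s, fun i (hi : i < n) => f (xs i hi))
  end.

Definition op (S : Signature) (X : Type) (n : nat) (s : S n)
  (xs : forall i : nat, i < n -> X) : PolyObj S X := existT _ n (s, xs).

Definition presentation (H : SetFunctor) (S : Signature)
  (eps : forall X : Type, PolyObj S X -> H X) : Prop :=
  (forall (X Y : Type) (f : X -> Y) (t : PolyObj S X),
      eps Y (PolyMap f t) = @Fmap H _ _ f (eps X t)) /\
  (forall (X : Type) (a : H X), exists t : PolyObj S X, eps X t = a).

Definition injective_vars (X : Type) (n : nat) (xs : forall i : nat, i < n -> X) : Prop :=
  forall i j (hi : i < n) (hj : j < n), xs i hi = xs j hj -> i = j.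

(* eps-equation sigma(x_1..x_n) = tau(z_1..z_m): X is exactly the set of
   variables occurring, and eps_X identifies both sides. *)
Definition eps_equation (H : SetFunctor) (S : Signature)
  (eps : forall X : Type, PolyObj S X -> H X)
  (X : Type) (n m : nat) (s : S n) (t : S m)
  (xs : forall i : nat, i < n -> X) (zs : forall j : nat, j < m -> X) : Prop :=
  (forall x : X, (exists i (hi : i < n), xs i hi = x) \/ (exists j (hj : j < m), zs j hj = x)) /\
  eps X (@op S X n s xs) = eps X (@op S X m t zs).

Definition reduced (H : SetFunctor) (S : Signature)
  (eps : forall X : Type, PolyObj S X -> H X) : Prop :=
  forall (X : Type) (n m : nat) (s : S n) (t : S m)
    (xs : forall i : nat, i < n -> X) (zs : forall j : nat, j < m -> X),
    @eps_equation H S eps X n m s t xs zs ->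
    @injective_vars X n xs ->
    (forall i (hi : i < n), exists j (hj : j < m), xs i hi = zs j hj) /\
    (@injective_vars X m zs -> existT S n s = existT S m t).

(* Main.v *)
Require Import Defs.
From Stdlib Require Import List Arith Lia Classical ClassicalEpsilon
  FunctionalExtensionality PropExtensionality ProofIrrelevance FinFun.

Definition F (n : nat) := {i : nat | i < n}.

Lemma F_eq n (p q : F n) : proj1_sig p = proj1_sig q -> p = q.
Proof.
  destruct p as [p hp], q as [q hq]; simpl; intros ->.
  f_equal; apply proof_irrelevance.
Qed.

Lemma min_ex (P : nat -> Prop) : (exists n, P n) ->
  exists n, P n /\ forall k, k < n -> ~ P k.
Proof.
  intros [n Hn]. revert Hn. induction n as [n IH] using lt_wf_ind. intro Hn.
  destruct (classic (exists k, k < n /\ P k)) as [[k [Hk Pk]]|N].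
  - exact (IH k Hk Pk).
  - exists n. split; auto. intros k Hk Pk. apply N; eauto.
Qed.

Lemma inj_le n m (f : nat -> nat) : (forall i, i < n -> f i < m) ->
  (forall i j, i < n -> j < n -> f i = f j -> i = j) -> n <= m.
Proof.
  intros Hb Hi.
  rewrite <- (length_seq n 0), <- (length_seq m 0).
  rewrite <- (length_map f (seq 0 n)).
  apply NoDup_incl_length.
  - apply Injective_map_NoDup_in.
    + intros x y Hx Hy. apply in_seq in Hx, Hy. apply Hi; lia.
    + apply seq_NoDup.
  - intros y Hy. apply in_map_iff in Hy. destruct Hy as [x [<- Hx]].
    apply in_seq in Hx. apply in_seq. specialize (Hb x). lia.
Qed.

Lemma F_le {n m} (f : F n -> F m) (g : F m -> F n) :
  (forall p, g (f p) = p) -> n <= m.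
Proof.
  intros Hgf.
  set (h := fun i => match lt_dec i n with
                     | left hi => proj1_sig (f (exist _ i hi))
                     | right _ => 0 end).
  apply (inj_le n m h).
  - intros i hi. unfold h. destruct (lt_dec i n); [|lia].
    apply (proj2_sig (f _)).
  - intros i j hi hj. unfold h.
    destruct (lt_dec i n) as [hi'|]; [|lia].
    destruct (lt_dec j n) as [hj'|]; [|lia].
    intro E. apply F_eq in E.
    apply (f_equal g) in E. rewrite !Hgf in E.
    apply (f_equal (@proj1_sig _ _)) in E. exact E.
Qed.

Lemma linv {A B : Type} (f : A -> B) :
  (forall p q, f p = f q -> p = q) -> (forall b : B, inhabited A) ->
  exists g : B -> A, (forall a, g (f a) = a) /\
                     (forall b, (exists a, f a = b) -> f (g b) = b).
Proof.
  intros Hi Hinh.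
  exists (fun b => epsilon (Hinh b) (fun a => f a = b)). split.
  - intro a. apply Hi. apply (epsilon_spec (Hinh (f a)) (fun a' => f a' = f a)).
    eauto.
  - intros b Hb. apply (epsilon_spec (Hinh b) (fun a' => f a' = b)). exact Hb.
Qed.

Lemma Fmap_ext {H : SetFunctor} {X Y} (f g : X -> Y) (a : H X) :
  (forall x, f x = g x) -> Fmap f a = Fmap g a.
Proof. intro E. apply functional_extensionality in E. now subst. Qed.

Lemma Fmap_compg {H : SetFunctor} {X Y Z} (f : X -> Y) (g : Y -> Z) (a : H X) :
  Fmap g (Fmap f a) = Fmap (fun x => g (f x)) a.
Proof. symmetry; apply Fmap_comp. Qed.

Lemma surj_reduce {H : SetFunctor} {A B} (s : B -> A) (d : H A) :
  (forall y, exists b, s b = y) -> exists d' : H B, Fmap s d' = d.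
Proof.
  intro Hs.
  assert (Hinh : forall y : A, inhabited B).
  { intro y. destruct (Hs y) as [b _]. exact (inhabits b). }
  set (sec := fun y => epsilon (Hinh y) (fun b => s b = y)).
  exists (Fmap sec d). rewrite Fmap_compg.
  rewrite <- (Fmap_id d) at 2. apply Fmap_ext. intro y.
  apply (epsilon_spec (Hinh y) (fun b => s b = y)). apply Hs.
Qed.

Lemma image_in_sub {H : SetFunctor} {A B} (f : A -> B) (a : H A) :
  in_sub (fun y => exists i, f i = y) (Fmap f a).
Proof.
  exists (Fmap (fun i => exist (fun y => exists i, f i = y) (f i) (ex_intro _ i eq_refl)) a).
  unfold Defs.incl_map. rewrite Fmap_compg. reflexivity.
Qed.

Lemma pull {H : SetFunctor} (stdH : standard H) {A B} (f : A -> B) (g : B -> A)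
  (a : H A) (Q : B -> Prop) :
  (forall x, g (f x) = x) -> in_sub Q (Fmap f a) -> in_sub (fun i => Q (f i)) a.
Proof.
  intros Hgf HQ.
  destruct (proj2 stdH B Q (fun y => exists i, f i = y) (Fmap f a) HQ
              (image_in_sub f a)) as [c Hc].
  assert (hp : forall y : {y : B | Q y /\ exists i, f i = y}, Q (f (g (proj1_sig y)))).
  { intros [y [Qy [i <-]]]. simpl. rewrite Hgf. exact Qy. }
  exists (Fmap (fun y => exist (fun i => Q (f i)) (g (proj1_sig y)) (hp y)) c).
  unfold Defs.incl_map in *. rewrite Fmap_compg. simpl.
  rewrite <- Fmap_compg. rewrite Hc. rewrite Fmap_compg.
  rewrite <- (Fmap_id a) at 2. apply Fmap_ext. exact Hgf.
Qed.

Definition full {H : SetFunctor} {n} (a : H (F n)) : Prop :=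
  forall P : F n -> Prop, in_sub P a -> forall i, P i.

Definition orb {H : SetFunctor} {n} (a b : H (F n)) : Prop :=
  exists f g : F n -> F n, (forall i, g (f i) = i) /\ (forall i, f (g i) = i) /\
                          b = Fmap f a.

Definition rep {H : SetFunctor} {n} (a : H (F n)) : H (F n) :=
  epsilon (inhabits a) (orb a).

Lemma orb_refl {H : SetFunctor} {n} (a : H (F n)) : orb a a.
Proof. exists (fun i => i), (fun i => i). repeat split. now rewrite Fmap_id. Qed.

Lemma orb_sym {H : SetFunctor} {n} (a b : H (F n)) : orb a b -> orb b a.
Proof.
  intros [f [g [H1 [H2 ->]]]]. exists g, f. repeat split; auto.
  rewrite Fmap_compg. rewrite <- (Fmap_id a) at 1. symmetry. apply Fmap_ext. auto.
Qed.

Lemma orb_trans {H : SetFunctor} {n} (a b c : H (F n)) : orb a b -> orb b c -> orb a c.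
Proof.
  intros [f [g [H1 [H2 ->]]]] [f' [g' [H1' [H2' ->]]]].
  exists (fun i => f' (f i)), (fun i => g (g' i)). repeat split.
  - intro i. rewrite H1'. auto.
  - intro i. rewrite H2. auto.
  - apply Fmap_compg.
Qed.

Lemma rep_orb {H : SetFunctor} {n} (a : H (F n)) : orb a (rep a).
Proof. unfold rep. apply epsilon_spec. exists a. apply orb_refl. Qed.

Lemma rep_eq {H : SetFunctor} {n} (a b : H (F n)) : orb a b -> rep a = rep b.
Proof.
  intro Hab. unfold rep.
  assert (E : orb a = orb b).
  { apply functional_extensionality. intro c. apply propositional_extensionality.
    split; intro h.
    - eapply orb_trans; [apply orb_sym; exact Hab| exact h].
    - eapply orb_trans; [exact Hab| exact h]. }
  rewrite E. f_equal. apply proof_irrelevance.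
Qed.

Lemma full_orb {H : SetFunctor} (stdH : standard H) {n} (a b : H (F n)) : full a -> orb a b -> full b.
Proof.
  intros Fa [f [g [H1 [H2 ->]]]] P HP j.
  pose proof (pull stdH f g a P H1 HP) as Hp.
  rewrite <- (H2 j). exact (Fa _ Hp (g j)).
Qed.

Definition Sig (H : SetFunctor) : Signature :=
  fun n => {a : H (F n) | full a /\ rep a = a}.

Definition epsH (H : SetFunctor) (X : Type) (t : PolyObj (Sig H) X) : H X :=
  match t with
  | existT _ n (s, xs) => Fmap (fun p : F n => xs (proj1_sig p) (proj2_sig p)) (proj1_sig s)
  end.

Lemma list_surj {X} (l : list X) :
  exists k (s : F k -> {x : X | In x l}), forall y, exists q, s q = y.
Proof.
  destruct l as [|y0 l'].
  - exists 0. exists (fun q => False_rect _ (Nat.nlt_0_r _ (proj2_sig q))).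
    intros [y []].
  - set (l := y0 :: l').
    exists (length l).
    exists (fun q => exist (fun x => In x l) (nth (proj1_sig q) l y0)
                      (nth_In l y0 (proj2_sig q))).
    intros [y Hy]. destruct (In_nth l y y0 Hy) as [i [Hi Hn]].
    exists (exist _ i Hi). simpl. subst y. f_equal. apply proof_irrelevance.
Qed.

Lemma sf_bound n i0 (q : F (n - 1)) :
  (if Nat.eqb (proj1_sig q) i0 then n - 1 else proj1_sig q) < n.
Proof. destruct q as [q hq]; simpl. destruct (Nat.eqb q i0); lia. Qed.

Definition sf n i0 (q : F (n - 1)) : F n := exist (fun i => i < n) _ (sf_bound n i0 q).

Lemma drop_one {n} (P : F n -> Prop) (i0 : F n) : ~ P i0 ->
  exists k, k < n /\ exists s : F k -> {p : F n | P p}, forall y, exists q, s q = y.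
Proof.
  intro Ni0.
  destruct (classic (exists p, P p)) as [[p0 Hp0]|N].
  - exists (n - 1). split. { destruct i0; simpl; lia. }
    exists (fun q : F (n - 1) => match excluded_middle_informative (P (sf n (proj1_sig i0) q)) with
                     | left h => exist _ _ h
                     | right _ => exist _ p0 Hp0 end).
    intros [p hp].
    assert (Hne : proj1_sig p <> proj1_sig i0).
    { intro E. apply F_eq in E. subst. contradiction. }
    assert (Hq : exists q : F (n - 1), sf n (proj1_sig i0) q = p).
    { destruct p as [pv hpv], i0 as [iv hiv]; simpl in *.
      destruct (Nat.eq_dec pv (n - 1)) as [->|Hpn].
      - assert (hq : iv < n - 1) by lia. exists (exist _ iv hq).
        apply F_eq. simpl. rewrite Nat.eqb_refl. reflexivity.
      - assert (hq : pv < n - 1) by lia. exists (exist _ pv hq).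
        apply F_eq. simpl. apply Nat.eqb_neq in Hne. rewrite Hne. reflexivity. }
    destruct Hq as [q Hq]. exists q.
    destruct (excluded_middle_informative _) as [h|h].
    + subst p. f_equal. apply proof_irrelevance.
    + exfalso. apply h. rewrite Hq. exact hp.
  - exists 0. split. { destruct i0; simpl; lia. }
    exists (fun q => False_rect _ (Nat.nlt_0_r _ (proj2_sig q))).
    intros [p hp]. exfalso. eauto.
Qed.

Lemma side {H : SetFunctor} (stdH : standard H) {X n m} (a : H (F n)) (b : H (F m))
  (xf : F n -> X) (zf : F m -> X) :
  full a -> (forall p q, xf p = xf q -> p = q) -> Fmap xf a = Fmap zf b ->
  forall p, exists q, zf q = xf p.
Proof.
  intros Fa Hi E p.
  destruct (linv xf Hi (fun _ => inhabits p)) as [g [Hg _]].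
  pose proof (image_in_sub zf b) as Hs. rewrite <- E in Hs.
  exact (Fa _ (pull stdH xf g a _ Hg Hs) p).
Qed.

Theorem mainTheorem8 (H : SetFunctor) :
  finitary H -> standard H ->
  exists (S : Signature) (eps : forall X : Type, PolyObj S X -> H X),
    @presentation H S eps /\ @reduced H S eps.
Proof.
  intros finH stdH.
  exists (Sig H), (epsH H). split; [split|].
  - intros X Y f [n [s xs]]. simpl. apply Fmap_comp.
  - intros X a.
    assert (Ex : exists n, exists (c : H (F n)) (x : F n -> X), Fmap x c = a).
    { destruct (finH X a) as [l [b Hb]].
      destruct (list_surj l) as [k [s Hs]].
      destruct (surj_reduce s b Hs) as [d' Hd'].
      exists k, d', (fun q => proj1_sig (s q)).
      rewrite <- Hb. unfold Defs.incl_map. rewrite <- Hd'. symmetry; apply Fmap_compg. }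
    destruct (min_ex _ Ex) as [n [[c [x Hc]] Hmin]].
    assert (Fc : full c).
    { intros P [d Hd] i. apply NNPP. intro Ni.
      destruct (drop_one P i Ni) as [k [Hk [s Hs]]].
      destruct (surj_reduce s d Hs) as [d' Hd'].
      apply (Hmin k Hk). exists d', (fun q => x (proj1_sig (s q))).
      rewrite <- Hc, <- Hd. unfold Defs.incl_map. rewrite <- Hd', !Fmap_compg.
      reflexivity. }
    pose proof (rep_orb c) as Ho.
    destruct Ho as [f [g [H1 [H2 Hc']]]].
    assert (Fc' : full (rep c)) by (eapply full_orb; eauto; apply rep_orb).
    assert (Rc' : rep (rep c) = rep c).
    { symmetry. apply rep_eq. apply rep_orb. }
    exists (existT _ n (exist _ (rep c) (conj Fc' Rc'),
                        fun i hi => x (g (exist _ i hi)))).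
    simpl. rewrite <- Hc.
    transitivity (Fmap (fun p => x (g p)) (rep c)).
    { apply Fmap_ext. intros [i hi]. reflexivity. }
    rewrite <- Fmap_compg. f_equal. rewrite Hc', Fmap_compg.
    rewrite <- (Fmap_id c) at 2. apply Fmap_ext. auto.
  - intros X n m [a [Fa Ra]] [b [Fb Rb]] xs zs [Cov E] Ix.
    simpl in E.
    set (xf := fun p : F n => xs (proj1_sig p) (proj2_sig p)) in E.
    set (zf := fun p : F m => zs (proj1_sig p) (proj2_sig p)) in E.
    assert (Ixf : forall p q, xf p = xf q -> p = q).
    { intros [i hi] [j hj] h. apply F_eq. exact (Ix i j hi hj h). }
    pose proof (side stdH a b xf zf Fa Ixf E) as S1.
    split.
    { intros i hi. destruct (S1 (exist _ i hi)) as [[j hj] Hq].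
      exists j, hj. symmetry. exact Hq. }
    intro Iz.
    assert (Izf : forall p q, zf p = zf q -> p = q).
    { intros [i hi] [j hj] h. apply F_eq. exact (Iz i j hi hj h). }
    pose proof (side stdH b a zf xf Fb Izf (eq_sym E)) as S2.
    assert (Inx : forall y, exists p, xf p = y).
    { intro y. destruct (Cov y) as [[i [hi Hy]]|[j [hj Hy]]].
      - exists (exist _ i hi). exact Hy.
      - destruct (S2 (exist _ j hj)) as [p Hp]. exists p. rewrite Hp. exact Hy. }
    assert (Inz : forall y, exists p, zf p = y).
    { intro y. destruct (Inx y) as [p <-]. apply S1. }
    destruct (linv xf Ixf (fun y => let (p, _) := (Inx y) in inhabits p))
      as [gx [Gx1 Gx2]].
    destruct (linv zf Izf (fun y => let (p, _) := (Inz y) in inhabits p))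
      as [gz [Gz1 Gz2]].
    assert (Hnm : n = m).
    { apply Nat.le_antisymm.
      - apply (F_le (fun p => gz (xf p)) (fun q => gx (zf q))).
        intro p. rewrite Gz2 by apply Inz. apply Gx1.
      - apply (F_le (fun q => gx (zf q)) (fun p => gz (xf p))).
        intro q. rewrite Gx2 by apply Inx. apply Gz1. }
    subst m.
    assert (Ob : orb b a).
    { exists (fun q => gx (zf q)), (fun p => gz (xf p)). repeat split.
      - intro q. rewrite Gx2 by apply Inx. apply Gz1.
      - intro p. rewrite Gz2 by apply Inz. apply Gx1.
      - rewrite <- Fmap_compg, <- E, Fmap_compg.
        rewrite <- (Fmap_id a) at 1. apply Fmap_ext. intro; symmetry; apply Gx1. }
    apply rep_eq in Ob. rewrite Ra, Rb in Ob. subst b.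
    f_equal. f_equal. apply proof_irrelevance.
Qed.
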